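(* Let $\Gamma$ be a $\Bbbk$-algebra and $\sim$ an equivalence relation on $\mathrm{cfs}(\Gamma)$. If $V$ is a strong block module, then for each $B\in\mathrm{cfs}(\Gamma)/{\sim}$ there is a decomposition of $\Gamma$-modules $V=V(B)\oplus V'$ where $\mathfrak mV'=V'$ for all $\mathfrak m\in\mathcal W(B)$ and $\mathfrak mV(B)=0$ for some $\mathfrak m\in\mathcal W(B)$.
   Context: $\mathrm{cfs}(\Gamma)$: maximal two-sided ideals $\mathfrak m$ of $\Gamma$ with $\dim\Gamma/\mathfrak m<\infty$. For a class $B$, $\mathcal W(B)=\{\mathfrak m_1\cdots\mathfrak m_k:k\ge0,\mathfrak m_i\in B\}$; for a $\Gamma$-module $V$, $V(B)=\{v:\mathfrak mv=0$ for some $\mathfrak m\in\mathcal W(B)\}$. $V$ is a strong block module if $V=\bigoplus_BV(B)$ and for each $B$ there is $\mathfrak m\in\mathcal W(B)$ with $\mathfrak mV(B)=0$. *)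

(* Defs.v *)
From mathcomp Require Import all_boot all_algebra.
From Stdlib Require List.
Set Implicit Arguments. Unset Strict Implicit. Unset Printing Implicit Defensive.
Import GRing.Theory.
Local Open Scope ring_scope.

Section Defs.
Variables (k : fieldType) (G : algType k).

Definition ideal2 (I : G -> Prop) : Prop :=
  [/\ I 0, (forall x y, I x -> I y -> I (x + y)),
      (forall a x, I x -> I (a * x)) & (forall a x, I x -> I (x * a))].

Definition max_ideal2 (m : G -> Prop) : Prop :=
  [/\ ideal2 m, (exists x, ~ m x) &
      (forall J, ideal2 J -> (forall x, m x -> J x) -> (exists x, ~ J x) ->
         forall x, J x -> m x)].

(* dim_k (G / m) < oo : finitely many elements span G modulo m *)
Definition fin_codim (m : G -> Prop) : Prop :=
  exists n (b : 'I_n -> G), forall x, exists c : 'I_n -> k,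
    m (x - \sum_(i < n) c i *: b i).

Definition cfs (m : G -> Prop) : Prop := max_ideal2 m /\ fin_codim m.

Definition prodI (I J : G -> Prop) : G -> Prop :=
  fun x => exists s : seq (G * G),
    (forall p, p \in s -> I p.1 /\ J p.2) /\ x = \sum_(p <- s) p.1 * p.2.

Definition prodl (ms : seq (G -> Prop)) : G -> Prop :=
  foldr prodI (fun _ => True) ms.

Definition cls (R : (G -> Prop) -> (G -> Prop) -> Prop) (m0 : G -> Prop)
  : (G -> Prop) -> Prop := fun m => cfs m /\ R m0 m.

(* "m in W(B)" is rendered as: m = prodl ms with List.Forall B ms *)

Variable V : lmodType G.

Definition submod (U : V -> Prop) : Prop :=
  [/\ U 0, (forall u v, U u -> U v -> U (u + v)) & (forall a u, U u -> U (a *: u))].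

Definition ann (I : G -> Prop) (U : V -> Prop) : Prop :=
  forall a u, I a -> U u -> a *: u = 0.

Definition smul (I : G -> Prop) (U : V -> Prop) : V -> Prop :=
  fun w => exists s : seq (G * V),
    (forall p, p \in s -> I p.1 /\ U p.2) /\ w = \sum_(p <- s) p.1 *: p.2.

Definition Vblk (B : (G -> Prop) -> Prop) : V -> Prop :=
  fun v => exists ms, List.Forall B ms /\ ann (prodl ms) (eq v).

(* V is a strong block module for the equivalence relation R on cfs(G):
   V = (+)_B V(B) (every v is a finite sum of elements of V(B)'s for distinct
   classes B, and such sums are direct), and each V(B) is killed by some
   element of W(B). Classes B are given by representatives m0 in cfs(G). *)
Definition strong_block (R : (G -> Prop) -> (G -> Prop) -> Prop) : Prop :=
  [/\ (forall v, exists n (r : 'I_n -> G -> Prop) (w : 'I_n -> V),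
         [/\ forall i, cfs (r i),
             forall i j, i != j -> ~ R (r i) (r j),
             forall i, Vblk (cls R (r i)) (w i) &
             v = \sum_(i < n) w i]),
      (forall n (r : 'I_n -> G -> Prop) (w : 'I_n -> V),
         (forall i, cfs (r i)) -> (forall i j, i != j -> ~ R (r i) (r j)) ->
         (forall i, Vblk (cls R (r i)) (w i)) ->
         \sum_(i < n) w i = 0 -> forall i, w i = 0) &
      (forall m0, cfs m0 -> exists ms, List.Forall (cls R m0) ms /\
         ann (prodl ms) (Vblk (cls R m0)))].

End Defs.

(* Main.v *)
Require Import Defs.
From mathcomp Require Import all_boot all_algebra.
From Stdlib Require List.
From Stdlib Require Import ClassicalDescription FunctionalExtensionality PropExtensionality Classical_Prop.
Set Implicit Arguments. Unset Strict Implicit. Unset Printing Implicit Defensive.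
Import GRing.Theory.
Local Open Scope ring_scope.

Section Alg.
Variables (k : fieldType) (G : algType k).

Lemma ideal2_True : ideal2 (fun _ : G => True).
Proof. by split. Qed.

Lemma ideal2_prodI (I J : G -> Prop) : ideal2 I -> ideal2 J -> ideal2 (prodI I J).
Proof.
case=> I0 ID IL IR; case=> J0 JD JL JR; split.
- by exists [::]; split => //; rewrite big_nil.
- move=> x y [s1 [H1 ->]] [s2 [H2 ->]]; exists (s1 ++ s2); split; last by rewrite big_cat.
  by move=> p; rewrite mem_cat => /orP [/H1|/H2].
- move=> a x [s [H ->]]; exists [seq (a * p.1, p.2) | p <- s]; split.
    by move=> p /mapP [q /H [Hq1 Hq2] ->]; split => //; apply: IL.
  by rewrite big_map mulr_sumr; apply: eq_bigr => p _; rewrite mulrA.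
- move=> a x [s [H ->]]; exists [seq (p.1, p.2 * a) | p <- s]; split.
    by move=> p /mapP [q /H [Hq1 Hq2] ->]; split => //; apply: JR.
  by rewrite big_map mulr_suml; apply: eq_bigr => p _; rewrite mulrA.
Qed.

Lemma ideal2_prodl (B : (G -> Prop) -> Prop) ms :
  (forall m, B m -> ideal2 m) -> List.Forall B ms -> ideal2 (prodl ms).
Proof.
move=> HB; elim: ms => [|m ms IH] /=; first by move=> _; apply: ideal2_True.
move/List.Forall_cons_iff => [Hm Hms]; apply: ideal2_prodI; [exact: HB | exact: IH].
Qed.

Definition comax (I J : G -> Prop) := exists a b, [/\ I a, J b & a + b = 1].

Lemma comax_r (I J K : G -> Prop) : ideal2 I -> ideal2 J -> ideal2 K ->
  comax I J -> comax I K -> comax I (prodI J K).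
Proof.
case=> I0 ID IL IR _ _ [i1 [j [Hi1 Hj E1]]] [i2 [c [Hi2 Hc E2]]].
exists (i1 * (i2 + c) + j * i2), (j * c); split.
- by apply: ID; [apply: IR | apply: IL].
- by exists [:: (j, c)]; split; [move=> p; rewrite inE => /eqP -> | rewrite big_seq1].
- by rewrite -addrA -mulrDr -mulrDl E1 mul1r E2.
Qed.

Lemma comax_l (I J K : G -> Prop) : ideal2 I -> ideal2 J -> ideal2 K ->
  comax I K -> comax J K -> comax (prodI I J) K.
Proof.
move=> _ _ [K0 KD KL KR] [i [c1 [Hi Hc1 E1]]] [j [c2 [Hj Hc2 E2]]].
exists (i * j), (i * c2 + c1 * (j + c2)); split.
- by exists [:: (i, j)]; split; [move=> p; rewrite inE => /eqP -> | rewrite big_seq1].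
- by apply: KD; [apply: KL | apply: KR].
- by rewrite E2 mulr1 addrA -mulrDr E2 mulr1 E1.
Qed.

Lemma comax_prodl_r (I : G -> Prop) (B : (G -> Prop) -> Prop) ms :
  ideal2 I -> (forall m, B m -> ideal2 m) -> (forall m, B m -> comax I m) ->
  List.Forall B ms -> comax I (prodl ms).
Proof.
move=> HI HB HC; elim: ms => [|m ms IH] /=.
  by move=> _; exists 0, 1; split => //; [case: HI | rewrite add0r].
move/List.Forall_cons_iff => [Hm Hms]; apply: comax_r => //.
- exact: HB.
- exact: (ideal2_prodl HB).
- exact: HC.
- exact: IH.
Qed.

Lemma comax_prodl_l (J : G -> Prop) (B : (G -> Prop) -> Prop) ms :
  ideal2 J -> (forall m, B m -> ideal2 m) -> (forall m, B m -> comax m J) ->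
  List.Forall B ms -> comax (prodl ms) J.
Proof.
move=> HJ HB HC; elim: ms => [|m ms IH] /=.
  by move=> _; exists 1, 0; split => //; [case: HJ | rewrite addr0].
move/List.Forall_cons_iff => [Hm Hms]; apply: comax_l => //.
- exact: HB.
- exact: (ideal2_prodl HB).
- exact: HC.
- exact: IH.
Qed.

Lemma comax_max (m m' : G -> Prop) : max_ideal2 m -> max_ideal2 m' -> m <> m' ->
  comax m m'.
Proof.
case=> Hm [x Hx] Mm; case=> Hm' [x' Hx'] Mm' Hne.
apply: NNPP => Hnc; apply: Hne.
have Jid : ideal2 (fun z => exists a b, [/\ m a, m' b & z = a + b]).
  case: Hm => m0 mD mL mR; case: Hm' => m'0 m'D m'L m'R; split.
  - by exists 0, 0; rewrite addr0.
  - move=> y z [a [b [Ha Hb ->]]] [a' [b' [Ha' Hb' ->]]].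
    exists (a + a'), (b + b'); split; [exact: mD | exact: m'D | by rewrite addrACA].
  - move=> c y [a [b [Ha Hb ->]]]; exists (c * a), (c * b); split;
      [exact: mL | exact: m'L | by rewrite mulrDr].
  - move=> c y [a [b [Ha Hb ->]]]; exists (a * c), (b * c); split;
      [exact: mR | exact: m'R | by rewrite mulrDl].
have sub : forall z, m' z -> m z.
  move=> z Hz; apply: (Mm _ Jid).
  - by move=> y Hy; exists y, 0; split => //; [case: Hm' | rewrite addr0].
  - exists 1 => -[a [b [Ha Hb E]]]; apply: Hnc; exists a, b; split => //.
  - by exists 0, z; split => //; [case: Hm | rewrite add0r].
have sub2 : forall z, m z -> m' z.
  by apply: (Mm' _ Hm) => //; exists x.
apply: functional_extensionality => z; apply: propositional_extensionality.
by split; [apply: sub2 | apply: sub].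
Qed.

End Alg.

Section Mod.
Variables (k : fieldType) (G : algType k) (V : lmodType G).

Lemma submod_Vblk (B : (G -> Prop) -> Prop) ms :
  (forall m, B m -> ideal2 m) -> List.Forall B ms ->
  ann (prodl ms) (@Vblk _ _ V B) -> submod (@Vblk _ _ V B).
Proof.
move=> HB Hms Ha; have [I0 ID IL IR] := ideal2_prodl HB Hms; split.
- by exists [::]; split => // a u _ <-; rewrite scaler0.
- by move=> u v Hu Hv; exists ms; split => // a w Ha' <-; rewrite scalerDr !(Ha a) ?addr0.
- move=> a u Hu; exists ms; split => // x w Hx <-.
  by rewrite scalerA; apply: Ha => //; apply: IR.
Qed.

Lemma submod_sum (U : V -> Prop) (I : Type) (r : seq I) (P : pred I) (F : I -> V) :
  submod U -> (forall i, P i -> U (F i)) -> U (\sum_(i <- r | P i) F i).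
Proof. by case=> U0 UD _ HF; apply: big_ind. Qed.

Lemma smul_add (I : G -> Prop) (U : V -> Prop) u v :
  smul I U u -> smul I U v -> smul I U (u + v).
Proof.
move=> [s1 [H1 ->]] [s2 [H2 ->]]; exists (s1 ++ s2); split; last by rewrite big_cat.
by move=> p; rewrite mem_cat => /orP [/H1|/H2].
Qed.

Lemma smul_one (I : G -> Prop) (U : V -> Prop) a u :
  I a -> U u -> smul I U (a *: u).
Proof.
by move=> Ha Hu; exists [:: (a, u)]; split; [move=> p; rewrite inE => /eqP -> | rewrite big_seq1].
Qed.

Lemma Forall_map_in (I : eqType) (T : Type) (Q : T -> Prop) (f : I -> T) (t : seq I) :
  (forall i, i \in t -> Q (f i)) -> List.Forall Q [seq f i | i <- t].
Proof.
elim: t => [|x t IH] H /=; first by constructor.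
constructor; first by apply: H; rewrite inE eqxx.
by apply: IH => i Hi; apply: H; rewrite inE Hi orbT.
Qed.

Lemma Forall_map_gen (T T' : Type) (Q : T -> Prop) (Q' : T' -> Prop) (f : T -> T') s :
  List.Forall Q s -> (forall p, Q p -> Q' (f p)) -> List.Forall Q' [seq f p | p <- s].
Proof.
move=> H HQ; elim: H => [|x l Hx _ IH] /=; constructor => //; exact: HQ.
Qed.

End Mod.

Definition pb (P : Prop) : bool := if excluded_middle_informative P then true else false.
Lemma pbE (P : Prop) : pb P = true <-> P.
Proof. by rewrite /pb; case: excluded_middle_informative. Qed.

Theorem mainTheorem17 (k : fieldType) (G : algType k)
  (R : (G -> Prop) -> (G -> Prop) -> Prop)
  (Rrefl : forall m, cfs m -> R m m)
  (Rsym : forall m m', cfs m -> cfs m' -> R m m' -> R m' m)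
  (Rtrans : forall m1 m2 m3, cfs m1 -> cfs m2 -> cfs m3 ->
              R m1 m2 -> R m2 m3 -> R m1 m3)
  (V : lmodType G) :
  strong_block V R ->
  forall m0 : G -> Prop, cfs m0 ->
  exists V' : V -> Prop,
    [/\ submod (@Vblk _ _ V (cls R m0)) /\ submod V',
        (forall v, exists a b, [/\ @Vblk _ _ V (cls R m0) a, V' b & v = a + b]),
        (forall v, @Vblk _ _ V (cls R m0) v -> V' v -> v = 0),
        (forall ms, List.Forall (cls R m0) ms ->
           forall v, V' v <-> smul (prodl ms) V' v) &
        (exists ms, List.Forall (cls R m0) ms /\
           ann (prodl ms) (@Vblk _ _ V (cls R m0)))].
Proof.
move=> [SB1 SB2 SB3] m0 Hm0.
have clsI : forall c m, cls R c m -> ideal2 m by move=> c m [[[]]].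
have subB : forall c, cfs c -> submod (@Vblk _ _ V (cls R c)).
  move=> c Hc; have [ms [Hms Ha]] := SB3 c Hc; exact: (submod_Vblk (clsI c) Hms Ha).
have comaxB : forall c ms ms', cfs c -> ~ R m0 c -> List.Forall (cls R m0) ms ->
    List.Forall (cls R c) ms' -> comax (prodl ms) (prodl ms').
  move=> c ms ms' Hc HR Hms Hms'.
  apply: (comax_prodl_l (B := cls R m0)) => //.
  - exact: (ideal2_prodl (clsI c)).
  - exact: clsI.
  move=> m Hm; apply: (@comax_prodl_r _ _ m (cls R c) ms') => //.
  - exact: clsI Hm.
  - exact: clsI.
  - move=> m' Hm'; apply: comax_max; [by case: Hm => [[]] | by case: Hm' => [[]] | ].
    move=> E; subst m'; case: Hm => Hcm R0m; case: Hm' => _ Rcm; apply: HR.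
    exact: (Rtrans _ _ _ Hm0 Hcm Hc R0m (Rsym _ _ Hc Hcm Rcm)).
have [ms0 [Hms0 Ha0]] := SB3 m0 Hm0.
have [I0 ID IL IR] := ideal2_prodl (clsI m0) Hms0.
pose Q := fun p : (G -> Prop) * V => [/\ cfs p.1, ~ R m0 p.1 & @Vblk _ _ V (cls R p.1) p.2].
pose V' := fun v : V => exists s, List.Forall Q s /\ v = \sum_(p <- s) p.2.
have V'sub : submod V'.
  split.
  - by exists [::]; rewrite big_nil.
  - move=> u v [s1 [H1 ->]] [s2 [H2 ->]]; exists (s1 ++ s2); split.
      by apply/List.Forall_app.
    by rewrite big_cat.
  - move=> a u [s [H ->]]; exists [seq (p.1, a *: p.2) | p <- s]; split.
      apply: (Forall_map_gen H) => p [Hc HR Hb]; split => //=.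
      by case: (subB _ Hc) => _ _; apply.
    by rewrite big_map scaler_sumr.
exists V'; split.
- by split => //; apply: subB.
- move=> v; have [n [r [w [Hr Hrr Hw ->]]]] := SB1 v.
  exists (\sum_(i < n | pb (R m0 (r i))) w i), (\sum_(i < n | ~~ pb (R m0 (r i))) w i).
  split; last by rewrite (bigID (fun i => pb (R m0 (r i)))).
  + apply: submod_sum; first exact: subB.
    move=> i /pbE Hi; have [ms [Hms Ha]] := Hw i; exists ms; split => //.
    apply: List.Forall_impl Hms => m [Hm Rm]; split => //.
    exact: (Rtrans _ _ _ Hm0 (Hr i) Hm Hi Rm).
  + exists [seq (r i, w i) | i <- [seq i <- index_enum 'I_n | ~~ pb (R m0 (r i))]].
    split; last by rewrite big_map big_filter.
    apply: Forall_map_in => i; rewrite mem_filter => /andP [Hi _]; split => //=.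
    by move=> HR; move: Hi; have -> : pb (R m0 (r i)) by apply/pbE.
- have key : forall s, List.Forall Q s -> exists a b,
      [/\ prodl ms0 a, b *: (\sum_(p <- s) p.2) = 0 & a + b = 1].
    elim => [|x s IH].
      by move=> _; exists 0, 1; split => //; rewrite ?big_nil ?scaler0 ?add0r.
    move/List.Forall_cons_iff => [[Hc HR Hb] Hs].
    have [a' [b' [Ha' Hb' E']]] := IH Hs.
    have [msx [Hmsx Hax]] := SB3 _ Hc.
    have [a1 [b1 [Ha1 Hb1 E1]]] := comaxB _ _ _ Hc HR Hms0 Hmsx.
    exists (a1 + b1 * a'), (b1 * b'); split.
    + by apply: ID => //; apply: IL.
    + rewrite big_cons scalerDr -!scalerA Hb' scaler0 addr0.
      apply: (Hax _ _ Hb1) => //.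
      by case: (subB _ Hc) => _ _; apply.
    + by rewrite -addrA -mulrDr E' mulr1.
  move=> v Hv [s [Hs Ev]]; have [a [b [Ha Hb E]]] := key s Hs.
  rewrite -[v]scale1r -E scalerDl (Ha0 a v Ha Hv) add0r Ev; exact: Hb.
- move=> ms Hms v; split.
  + move=> [s [Hs ->]]; elim: s Hs => [|x s IH].
      by move=> _; exists [::]; rewrite !big_nil.
    move/List.Forall_cons_iff => [[Hc HR Hb] Hs]; rewrite big_cons.
    apply: smul_add; last exact: IH.
    have [msx [Hmsx Hax]] := SB3 _ Hc.
    have [a [b [Ha Hb' E]]] := comaxB _ _ _ Hc HR Hms Hmsx.
    have -> : x.2 = a *: x.2.
      by rewrite -{1}[x.2]scale1r -E scalerDl (Hax b x.2 Hb' Hb) addr0.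
    apply: smul_one => //; exists [:: x]; split; last by rewrite big_seq1.
    by constructor.
  + move=> [s [Hs ->]]; rewrite big_seq; apply: submod_sum => // p /Hs [_ Hp].
    by case: V'sub => _ _; apply.
- by exists ms0.
Qed.
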